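(* Let $u\in\Sigma$, $\sigma\in\Sigma^+$ and $i,j\in\mathbb N$ with $u\ne\sigma[0]$. If $\langle\{u^i\cdot\sigma\},\{u^j\cdot\sigma\}\rangle$ has a deduction tree, then every (in particular the minimal) deduction tree of it has size at least $\min(i,j)+1$.
   Context: Let $AP$ be a finite set of atomic propositions and $\Sigma=2^{AP}$; $\sigma[0]$ is the first letter of $\sigma$ and $u^i$ is the word consisting of $i$ copies of the letter $u$. For $\sigma=w_0\cdots w_m\in\Sigma^+$ and $j\le m$, $\sigma^{(j)}=w_j\cdots w_m$. For $A\subseteq\Sigma^+$: $A^{\mathsf X}=\{\sigma^{(1)}:\sigma\in A,|\sigma|\ge2\}$; $A^{\mathsf G}=\{\sigma^{(j)}:\sigma\in A,0\le j<|\sigma|\}$; a future point for $A$ is $f:A\to\mathbb N$ with $f(\sigma)<|\sigma|$, and $A^f=\{\sigma^{(f(\sigma))}:\sigma\in A\}$. For a literal $\alpha\in\{p,\neg p:p\in AP\}$, $A\models\alpha$ means $\alpha$ holds at position $0$ of every trace in $A$; $B\perp\alpha$ means it fails at position $0$ of every trace in $B$. Proof system on terms $\langle A,B\rangle$: Atomic: $\langle A,B\rangle$ if $A\models\alpha$, $B\perp\alpha$ for a literal $\alpha$; Or: $\langle A_1\uplus A_2,B\rangle$ from $\langle A_1,B\rangle,\langle A_2,B\rangle$; And: $\langle A,B_1\uplus B_2\rangle$ from $\langle A,B_1\rangle,\langle A,B_2\rangle$; Next: $\langle A,B\rangle$ from $\langle A^{\mathsf X},B^{\mathsf X}\rangle$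 if $|A^{\mathsf X}|=|A|$; WeakNext: $\langle A,B\rangle$ from $\langle A^{\mathsf X},B^{\mathsf X}\rangle$ if $|B^{\mathsf X}|=|B|$; Future: $\langle A,B\rangle$ from $\langle A^f,B^{\mathsf G}\rangle$, $f$ a future point for $A$; Globally: $\langle A,B\rangle$ from $\langle A^{\mathsf G},B^f\rangle$, $f$ a future point for $B$ ($\uplus$ = disjoint union). A deduction tree for $\langle A,B\rangle$ is a finite tree of rule applications rooted at $\langle A,B\rangle$ with all hypotheses derived; its size is its number of rule applications. *)

(* Defs.v *)
From HB Require Import structures.
From mathcomp Require Import all_boot.
From mathcomp Require Import finmap.
Set Implicit Arguments. Unset Strict Implicit. Unset Printing Implicit Defensive.
Open Scope fset_scope.

Definition letter (AP : finType) := {set AP}.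
(* Traces: finite words; the relevant ones are nonempty (Sigma^+). *)
Definition trace (AP : finType) := seq {set AP}.

(* First letter sigma[0] (all traces occurring below are nonempty). *)
Definition first (AP : finType) (s : trace AP) : {set AP} := nth set0 s 0.

Definition suffix (AP : finType) (s : trace AP) (j : nat) : trace AP := drop j s.

Definition upow (AP : finType) (u : {set AP}) (i : nat) : trace AP := nseq i u.

Section Ops.
Variable AP : finType.
Implicit Types A B : {fset trace AP}.

Definition setX A : {fset trace AP} :=
  [fset suffix s 1 | s in [fset s in A | 2 <= size s]].

Definition setG A : {fset trace AP} :=
  [fset t | t in flatten [seq [seq suffix s j | j <- iota 0 (size s)] | s <- A]].

Definition future_point A (f : trace AP -> nat) : Prop :=
  forall s, s \in A -> f s < size s.

Definition setF A (f : trace AP -> nat) : {fset trace AP} :=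
  [fset suffix s (f s) | s in A].

End Ops.

Inductive literal (AP : finType) := Pos of AP | Neg of AP.

Definition lit_holds (AP : finType) (a : literal AP) (w : {set AP}) : bool :=
  match a with Pos p => p \in w | Neg p => p \notin w end.

Definition models (AP : finType) (A : {fset trace AP}) (a : literal AP) : Prop :=
  forall s, s \in A -> lit_holds a (first s).

Definition refutes (AP : finType) (B : {fset trace AP}) (a : literal AP) : Prop :=
  forall s, s \in B -> ~~ lit_holds a (first s).

Definition dunion (AP : finType) (A A1 A2 : {fset trace AP}) : Prop :=
  A = A1 `|` A2 /\ A1 `&` A2 = fset0.

Inductive deduction (AP : finType) : {fset trace AP} -> {fset trace AP} -> nat -> Prop :=
| D_atomic A B (a : literal AP) :
    models A a -> refutes B a -> deduction A B 1
| D_or A A1 A2 B n1 n2 :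
    dunion A A1 A2 -> deduction A1 B n1 -> deduction A2 B n2 ->
    deduction A B (n1 + n2).+1
| D_and A B B1 B2 n1 n2 :
    dunion B B1 B2 -> deduction A B1 n1 -> deduction A B2 n2 ->
    deduction A B (n1 + n2).+1
| D_next A B n :
    #|` setX A| = #|` A| -> deduction (setX A) (setX B) n -> deduction A B n.+1
| D_weaknext A B n :
    #|` setX B| = #|` B| -> deduction (setX A) (setX B) n -> deduction A B n.+1
| D_future A B (f : trace AP -> nat) n :
    future_point A f -> deduction (setF A f) (setG B) n -> deduction A B n.+1
| D_globally A B (f : trace AP -> nat) n :
    future_point B f -> deduction (setG A) (setF B f) n -> deduction A B n.+1.

(* Main.v *)
Require Import Defs.
From HB Require Import structures.
From mathcomp Require Import all_boot finmap.
Open Scope fset_scope.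
Set Implicit Arguments.
Unset Strict Implicit.
Section S.
Variable AP : finType.
Implicit Types A B : {fset trace AP}.

Lemma setX_lt A c : c \in A -> size c <= 1 -> (#|`Defs.setX A| < #|`A|).
Proof.
move=> cA sc; rewrite /Defs.setX.
apply: (leq_ltn_trans (leq_imfset_card _ _ _)).
apply: fproper_ltn_card; rewrite fproperE; apply/andP; split.
  by apply/fsubsetP => x; rewrite !inE => /andP[].
by apply/negP => /fsubsetP/(_ c cA); rewrite !inE cA /=; move: sc; case: (size c) => [|[|]].
Qed.

Lemma in_setX A c : c \in A -> 2 <= size c -> Defs.suffix c 1 \in Defs.setX A.
Proof. by move=> cA sc; apply: in_imfset; rewrite !inE cA. Qed.

Lemma in_setF A f c : c \in A -> Defs.suffix c (f c) \in setF A f.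
Proof. by move=> cA; apply: in_imfset. Qed.

Lemma in_setG A c k : c \in A -> k < size c -> Defs.suffix c k \in setG A.
Proof.
move=> cA kc; rewrite /setG inE; apply/flatten_mapP; exists c => //.
by apply: map_f; rewrite mem_iota.
Qed.

Lemma common A B n : deduction A B n -> forall c, c \in A -> c \in B -> False.
Proof.
elim=> {A B n}.
- by move=> A B a hA hB c cA cB; move: (hA c cA) (hB c cB) => ->.
- move=> A A1 A2 B n1 n2 [-> _] _ IH1 _ IH2 c; rewrite inE => /orP[]; eauto.
- move=> A B B1 B2 n1 n2 [-> _] _ IH1 _ IH2 c cA; rewrite inE => /orP[]; eauto.
- move=> A B n hc _ IH c cA cB; case: (leqP (size c) 1) => sc.
    by move: (setX_lt cA sc); rewrite hc ltnn.
  exact: (IH _ (in_setX cA sc) (in_setX cB sc)).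
- move=> A B n hc _ IH c cA cB; case: (leqP (size c) 1) => sc.
    by move: (setX_lt cB sc); rewrite hc ltnn.
  exact: (IH _ (in_setX cA sc) (in_setX cB sc)).
- move=> A B f n hf _ IH c cA cB.
  exact: (IH _ (in_setF f cA) (in_setG cB (hf c cA))).
- move=> A B f n hf _ IH c cA cB.
  exact: (IH _ (in_setG cA (hf c cB)) (in_setF f cB)).
Qed.
End S.
From mathcomp Require Import zify.
Section M.
Variable AP : finType.
Variable u : {set AP}.

Lemma dropk p k (s : trace AP) : k <= p -> Defs.suffix (nseq p u ++ s) k = nseq (p-k) u ++ s.
Proof.
move=> kp; rewrite /Defs.suffix drop_cat size_nseq; case: ltnP => h.
  by rewrite drop_nseq.
have -> : p = k by lia.
by rewrite subnn drop0.
Qed.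

Lemma dropm p m (s : trace AP) : Defs.suffix (nseq p u ++ s) (p + m) = drop m s.
Proof.
by rewrite /Defs.suffix drop_cat size_nseq ltnNge leq_addr /= addKn.
Qed.

Lemma main A B n : deduction A B n -> forall p q (s : trace AP), 0 < size s -> p != q ->
  nseq p u ++ s \in A -> nseq q u ++ s \in B -> minn p q < n.
Proof.
elim=> {A B n}.
- move=> A B a hA hB [|p] [|q] s hs pq aA bB; rewrite ?min0n ?minn0 //.
  by move: (hA _ aA) (hB _ bB); rewrite /first /= => ->.
- move=> A A1 A2 B n1 n2 [-> _] _ IH1 _ IH2 p q s hs pq; rewrite inE => /orP[] aA bB.
    by move: (IH1 p q s hs pq aA bB); lia.
  by move: (IH2 p q s hs pq aA bB); lia.
- move=> A B B1 B2 n1 n2 [-> _] _ IH1 _ IH2 p q s hs pq aA; rewrite inE => /orP[] bB.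
    by move: (IH1 p q s hs pq aA bB); lia.
  by move: (IH2 p q s hs pq aA bB); lia.
- move=> A B n _ _ IH [|p] [|q] s hs pq aA bB; rewrite ?min0n ?minn0 //.
  have sa : 2 <= size (nseq p.+1 u ++ s) by rewrite size_cat size_nseq; lia.
  have sb : 2 <= size (nseq q.+1 u ++ s) by rewrite size_cat size_nseq; lia.
  have xa := in_setX aA sa; have xb := in_setX bB sb.
  rewrite dropk // subSS subn0 in xa; rewrite dropk // subSS subn0 in xb.
  move: (IH p q s hs pq xa xb); lia.
- move=> A B n _ _ IH [|p] [|q] s hs pq aA bB; rewrite ?min0n ?minn0 //.
  have sa : 2 <= size (nseq p.+1 u ++ s) by rewrite size_cat size_nseq; lia.
  have sb : 2 <= size (nseq q.+1 u ++ s) by rewrite size_cat size_nseq; lia.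
  have xa := in_setX aA sa; have xb := in_setX bB sb.
  rewrite dropk // subSS subn0 in xa; rewrite dropk // subSS subn0 in xb.
  move: (IH p q s hs pq xa xb); lia.
- move=> A B f n hf D IH p q s hs pq aA bB.
  have aF := in_setF f aA.
  have kl := hf _ aA; rewrite size_cat size_nseq in kl.
  move: aF kl; set k := f _ => aF kl.
  case: (leqP k p) => kp.
    rewrite dropk // in aF.
    case: (leqP (p - k) q) => h.
      have bG := in_setG bB (k := q - (p - k)) ltac:(rewrite size_cat size_nseq; lia).
      rewrite dropk in bG; last by lia.
      rewrite (_ : q - (q - (p - k)) = p - k) in bG; last by lia.
      by case: (common D aF bG).
    have pq' : p - k != q by lia.
    have bG0 : nseq q u ++ s \in setG B.
      by move: (in_setG (k:=0) bB); rewrite /Defs.suffix drop0 size_cat size_nseq; apply; rewrite addn_gt0 hs orbT.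
    move: (IH _ _ _ hs pq' aF bG0); lia.
  have bG := in_setG bB (k := q + (k - p)) ltac:(rewrite size_cat size_nseq; lia).
  rewrite dropm in bG.
  have e : k = (p + (k - p))%N by lia.
  rewrite e dropm in aF.
  by case: (common D aF bG).
- move=> A B f n hf D IH p q s hs pq aA bB.
  have bF := in_setF f bB.
  have kl := hf _ bB; rewrite size_cat size_nseq in kl.
  move: bF kl; set k := f _ => bF kl.
  case: (leqP k q) => kq.
    rewrite dropk // in bF.
    case: (leqP (q - k) p) => h.
      have aG := in_setG aA (k := p - (q - k)) ltac:(rewrite size_cat size_nseq; lia).
      rewrite dropk in aG; last by lia.
      rewrite (_ : p - (p - (q - k)) = q - k) in aG; last by lia.
      by case: (common D aG bF).
    have pq' : p != q - k by lia.
    have aG0 : nseq p u ++ s \in setG A.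
      by move: (in_setG (k:=0) aA); rewrite /Defs.suffix drop0 size_cat size_nseq; apply; rewrite addn_gt0 hs orbT.
    move: (IH _ _ _ hs pq' aG0 bF); lia.
  have aG := in_setG aA (k := p + (k - q)) ltac:(rewrite size_cat size_nseq; lia).
  rewrite dropm in aG.
  have e : k = (q + (k - q))%N by lia.
  rewrite e dropm in bF.
  by case: (common D aG bF).
Qed.
End M.

Theorem lemma11 (AP : finType) (u : {set AP}) (sigma : trace AP) (i j : nat) :
  0 < size sigma -> u != first sigma ->
  forall n : nat,
    deduction [fset upow u i ++ sigma] [fset upow u j ++ sigma] n ->
    minn i j + 1 <= n.
Proof.
move=> hs _ n D.
have [eij|nij] := eqVneq i j.
  subst j; case: (common D (c := upow u i ++ sigma)); by rewrite inE.
rewrite addn1; rewrite /upow in D; apply: (main D hs nij); by rewrite inE.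
Qed.
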